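(* Let $K$ and $S$ be compact Hausdorff spaces and let $T\colon C(K)\to C(S)$ be a U-embedding. Let $F_T\colon S\to C(K)^*$ be $F_T(s)=T^*(\delta_s)$ and let $A_0:=F_T^{-1}(\{\pm\delta_k: k\in K\})\subset S$ (a homeomorphic copy of $K$ inside $S$). Then $A_0$ is a zero-set of $S$, and hence a $G_\delta$-subset of $S$.
   Context: $C(K)$, $C(S)$ carry the sup norm; $C(K)^*$ is identified with regular Borel signed measures, $\delta_k$ the Dirac measure at $k$; $\{\pm\delta_k:k\in K\}$ is the set of extreme points of the unit ball of $C(K)^*$, so $A_0$ is the U-core of $T$. A linear isometry $T\colon X\to Y$ is a U-embedding if every $x^*\in X^*$ has a unique $y^*\in Y^*$ with $T^*(y^* )=x^*$ and $\|y^*\|=\|x^*\|$. A zero-set of $S$ is a set of the form $\{t\in S:f(t)=0\}$ with $f\in C(S)$. *)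

(* Defs.v *)
From HB Require Import structures.
From mathcomp Require Import all_boot all_order all_algebra.
From mathcomp Require Import all_classical all_reals all_analysis.
Set Implicit Arguments. Unset Strict Implicit. Unset Printing Implicit Defensive.
Import Order.TTheory GRing.Theory Num.Theory numFieldNormedType.Exports.
Local Open Scope classical_set_scope.
Local Open Scope ring_scope.

Section CK.
Variable R : realType.
Variable K : topologicalType.

Definition Cfun : set (K -> R) := [set f : K -> R | continuous f].

Definition supnorm (f : K -> R) : R := sup [set `|f x| | x in [set: K]].

(* linear functional on C(K) (values outside C(K) are irrelevant) *)
Definition lin_on_C (phi : (K -> R) -> R) : Prop :=
  forall (a : R) (f g : K -> R), Cfun f -> Cfun g ->
    phi (fun x => a * f x + g x) = a * phi f + phi g.

Definition dual_elt (phi : (K -> R) -> R) : Prop :=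
  lin_on_C phi /\
  exists c : R, forall f, Cfun f -> `|phi f| <= c * supnorm f.

Definition dualnorm (phi : (K -> R) -> R) : R :=
  sup [set `|phi f| | f in [set f | Cfun f /\ supnorm f <= 1]].

(* equality of functionals as elements of C(K)^* *)
Definition eq_on_C (phi psi : (K -> R) -> R) : Prop :=
  forall f, Cfun f -> phi f = psi f.

Definition dirac_fun (k : K) : (K -> R) -> R := fun f => f k.
End CK.

Section Emb.
Variable R : realType.
Variables K S : topologicalType.

Definition lin_isometry (T : (K -> R) -> (S -> R)) : Prop :=
  (forall f, Cfun f -> Cfun (T f)) /\
  (forall (a : R) (f g : K -> R), Cfun f -> Cfun g ->
      T (fun x => a * f x + g x) = (fun s => a * T f s + T g s)) /\
  (forall f, Cfun f -> supnorm (T f) = supnorm f).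

Definition adjoint (T : (K -> R) -> (S -> R)) (y : (S -> R) -> R) : (K -> R) -> R :=
  fun f => y (T f).

Definition U_embedding (T : (K -> R) -> (S -> R)) : Prop :=
  lin_isometry T /\
  forall x : (K -> R) -> R, dual_elt x ->
    exists y : (S -> R) -> R,
      [/\ dual_elt y, eq_on_C (adjoint T y) x, dualnorm y = dualnorm x &
        forall y' : (S -> R) -> R, dual_elt y' ->
          eq_on_C (adjoint T y') x -> dualnorm y' = dualnorm x -> eq_on_C y' y].

Definition F_T (T : (K -> R) -> (S -> R)) (s : S) : (K -> R) -> R :=
  adjoint T (@dirac_fun R _ s).

Definition A0 (T : (K -> R) -> (S -> R)) : set S :=
  [set s | exists k : K,
     eq_on_C (F_T T s) (@dirac_fun R _ k) \/
     eq_on_C (F_T T s) (fun f => - @dirac_fun R _ k f)].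
End Emb.

Definition zero_set (R : realType) (S : topologicalType) (A : set S) : Prop :=
  exists g : S -> R, continuous g /\ A = [set s | g s = 0].

Definition G_delta (S : topologicalType) (A : set S) : Prop :=
  exists U : nat -> set S, (forall n, open (U n)) /\ A = \bigcap_n U n.

(* Main.v *)
Require Import Defs.
From HB Require Import structures.
From mathcomp Require Import all_boot all_order all_algebra.
From mathcomp Require Import all_classical all_reals all_analysis.
From mathcomp Require Import ring lra.
Set Implicit Arguments. Unset Strict Implicit. Unset Printing Implicit Defensive.
Import Order.TTheory GRing.Theory Num.Theory numFieldNormedType.Exports.
Local Open Scope classical_set_scope.
Local Open Scope ring_scope.

Section Sup.
Variable R : realType.
Variable K : topologicalType.
Hypothesis hK : compact [set: K].

Lemma cont_bounded (f : K -> R) : continuous f -> exists M : R, forall x, `|f x| <= M.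
Proof.
move=> cf.
have : compact (f @` [set: K]) by apply: continuous_compact => //; apply: continuous_subspaceT.
move=> /compact_bounded [M [_ HM]].
exists (M + 1) => x; apply: (HM (M+1)); first by rewrite ltrDl.
by exists x.
Qed.

Lemma supnorm_ge (f : K -> R) x : Cfun f -> `|f x| <= supnorm f.
Proof.
move=> cf; apply: sup_upper_bound; last by exists x.
split; first by exists `|f x|, x.
have [M HM] := cont_bounded cf; exists M => _ [y _ <-]; exact: HM.
Qed.

Lemma supnorm_le (f : K -> R) c : 0 <= c -> (forall x, `|f x| <= c) -> supnorm f <= c.
Proof.
move=> c0 H; rewrite /supnorm.
have [[x _]|nx] := pselect (exists x : K, True).
  apply: ge_sup; first by exists `|f x|, x.
  by move=> _ [y _ <-]; exact: H.
have -> : [set `|f x| | x in [set: K]] = set0.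
  by apply/seteqP; split => // t [y _ _]; apply: nx; exists y.
by rewrite sup0.
Qed.

Lemma supnorm_ge0 (f : K -> R) : 0 <= supnorm f.
Proof.
rewrite /supnorm; have [[x _]|nx] := pselect (exists x : K, True).
  have [hs|hs] := pselect (has_sup [set `|f x| | x in [set: K]]).
    apply: (le_trans (normr_ge0 (f x))); apply: sup_upper_bound => //; by exists x.
  by rewrite sup_out.
have -> : [set `|f x| | x in [set: K]] = set0.
  by apply/seteqP; split => // t [y _ _]; apply: nx; exists y.
by rewrite sup0.
Qed.
End Sup.

Section Cont.
Variable R : realType.
Variable X : topologicalType.
Implicit Types f g : X -> R.

Lemma C_cst (c : R) : Cfun (fun _ : X => c).
Proof. by move=> x; apply: cvg_cst. Qed.

Lemma C_add f g : Cfun f -> Cfun g -> Cfun (fun x => f x + g x).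
Proof. rewrite /Cfun /= => cf cg x; have := (@continuousD R R^o X f g x (cf x) (cg x)); exact. Qed.

Lemma C_mul f g : Cfun f -> Cfun g -> Cfun (fun x => f x * g x).
Proof. rewrite /Cfun /= => cf cg x; have := (@continuousM R X f g x (cf x) (cg x)); exact. Qed.

Lemma C_opp f : Cfun f -> Cfun (fun x => - f x).
Proof. rewrite /Cfun /= => cf x; have := (@continuousN R R^o X f x (cf x)); exact. Qed.

Lemma C_norm f : Cfun f -> Cfun (fun x => `|f x|).
Proof. rewrite /Cfun /= => cf x; apply: continuous_comp; [exact: cf| exact: norm_continuous]. Qed.

Lemma C_inv f : (forall x, f x != 0) -> Cfun f -> Cfun (fun x => (f x)^-1).
Proof. rewrite /Cfun /= => nz cf x; have := (@continuousV R X f x (nz x) (cf x)); exact. Qed.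

Lemma C_min f g : Cfun f -> Cfun g -> Cfun (fun x => Num.min (f x) (g x)).
Proof. rewrite /Cfun /= => cf cg x; have := (@continuous_min R X f g x (cf x) (cg x)); exact. Qed.

Lemma C_lin (a : R) f g : Cfun f -> Cfun g -> Cfun (fun x => a * f x + g x).
Proof. by move=> cf cg; apply: C_add => //; apply: C_mul => //; apply: C_cst. Qed.
End Cont.
Arguments C_cst {R X} c.
Arguments C_lin {R X} a {f g}.

Section Lin.
Variable R : realType.
Variable X : topologicalType.
Implicit Types f g : X -> R.
Variable phi : (X -> R) -> R.
Hypothesis hphi : lin_on_C phi.

Lemma lin0 : phi (fun _ => 0) = 0.
Proof.
have := hphi 1 (C_cst 0) (C_cst 0).
have -> : (fun x : X => 1 * 0 + 0) = (fun _ => 0 : R) by apply/funext => x; rewrite mulr0 addr0.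
rewrite mul1r => h; lra.
Qed.

Lemma linZ a f : Cfun f -> phi (fun x => a * f x) = a * phi f.
Proof.
move=> cf; have := hphi a cf (C_cst 0).
have -> : (fun x : X => a * f x + 0) = (fun x => a * f x) by apply/funext => x; rewrite addr0.
by rewrite lin0 addr0.
Qed.

Lemma linD f g : Cfun f -> Cfun g -> phi (fun x => f x + g x) = phi f + phi g.
Proof.
move=> cf cg; have := hphi 1 cf cg.
have -> : (fun x : X => 1 * f x + g x) = (fun x => f x + g x) by apply/funext => x; rewrite mul1r.
by rewrite mul1r.
Qed.

Lemma linB f g : Cfun f -> Cfun g -> phi (fun x => f x - g x) = phi f - phi g.
Proof.
move=> cf cg; have := hphi (-1) cg cf.
have -> : (fun x : X => -1 * g x + f x) = (fun x => f x - g x) by apply/funext => x; rewrite mulN1r addrC.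
by rewrite mulN1r addrC.
Qed.
End Lin.

Section Dual.
Variable R : realType.
Variable X : topologicalType.
Hypothesis hX : compact [set: X].
Implicit Types f g : X -> R.

Lemma ball0 : Cfun (fun _ : X => 0 : R) /\ supnorm (fun _ : X => 0 : R) <= 1.
Proof.
split; first exact: C_cst.
by apply: supnorm_le => // x; rewrite normr0.
Qed.

Lemma dual_has_sup (phi : (X -> R) -> R) : dual_elt phi ->
  has_sup [set `|phi f| | f in [set f | Cfun f /\ supnorm f <= 1]].
Proof.
move=> [lphi [c hc]]; split; first by exists `|phi (fun _ => 0)|, (fun _ => 0); first exact: ball0.
exists `|c| => _ [f [cf sf] <-].
apply: (le_trans (hc f cf)); apply: (le_trans (ler_norm _)).
rewrite normrM (ger0_norm (supnorm_ge0 f)).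
by rewrite -[leRHS]mulr1 ler_wpM2l.
Qed.

Lemma dn_ge (phi : (X -> R) -> R) f : dual_elt phi -> Cfun f -> supnorm f <= 1 ->
  `|phi f| <= dualnorm phi.
Proof.
move=> dphi cf sf; apply: sup_upper_bound; first exact: dual_has_sup.
by exists f.
Qed.

Lemma dn_ge0 (phi : (X -> R) -> R) : dual_elt phi -> 0 <= dualnorm phi.
Proof.
move=> dphi; apply: le_trans (dn_ge dphi ball0.1 ball0.2); exact: normr_ge0.
Qed.

Lemma dn_le (phi : (X -> R) -> R) c :
  (forall f, Cfun f -> supnorm f <= 1 -> `|phi f| <= c) -> dualnorm phi <= c.
Proof.
move=> H; apply: ge_sup; first by exists `|phi (fun _ => 0)|, (fun _ => 0); first exact: ball0.
by move=> _ [f [cf sf] <-]; exact: H.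
Qed.

Lemma dn_approx (phi : (X -> R) -> R) e : dual_elt phi -> 0 < e ->
  exists f, [/\ Cfun f, supnorm f <= 1 & dualnorm phi - e < `|phi f|].
Proof.
move=> dphi e0; have [_ [f [cf sf] <-] H] := sup_adherent e0 (dual_has_sup dphi).
by exists f.
Qed.

Lemma dn_bound (phi : (X -> R) -> R) f : dual_elt phi -> Cfun f ->
  `|phi f| <= dualnorm phi * supnorm f.
Proof.
move=> dphi cf; have s0 := supnorm_ge0 f.
have [sz|spos] := eqVneq (supnorm f) 0.
  have -> : f = (fun _ => 0).
    apply/funext => x; apply/eqP; rewrite -normr_eq0 eq_le normr_ge0 andbT.
    by rewrite -sz; apply: supnorm_ge.
  by rewrite (lin0 dphi.1) normr0 mulr_ge0 // ?dn_ge0 // supnorm_ge0.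
have sp : 0 < supnorm f by rewrite lt_def spos s0.
have := dn_ge dphi (C_lin ((supnorm f)^-1) cf (C_cst 0)) _.
have -> : (fun x => (supnorm f)^-1 * f x + 0) = (fun x => (supnorm f)^-1 * f x).
  by apply/funext => x; rewrite addr0.
rewrite (linZ dphi.1 _ cf) normrM ger0_norm ?invr_ge0 //.
rewrite ler_pdivrMl // mulrC; apply.
apply: supnorm_le => // x; rewrite normrM ger0_norm ?invr_ge0 //.
by rewrite ler_pdivrMl // mulr1; apply: supnorm_ge.
Qed.
End Dual.

Definition mulF (R : realType) (X : Type) (h : X -> R) (phi : (X -> R) -> R) : (X -> R) -> R :=
  fun f => phi (fun x => h x * f x).

Definition sgn (R : realType) (v : R) : R := if 0 <= v then 1 else -1.

Lemma sgnE (R : realType) (v : R) : sgn v * v = `|v|.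
Proof. rewrite /sgn; case: ifP => h; first by rewrite mul1r ger0_norm. 
by rewrite mulN1r ltr0_norm // ltNge h. Qed.

Lemma sgn_norm (R : realType) (v : R) : `|sgn v| = 1.
Proof. by rewrite /sgn; case: ifP; rewrite ?normrN normr1. Qed.

Section Split.
Variable R : realType.
Variable X : topologicalType.
Hypothesis hX : compact [set: X].
Implicit Types f g h : X -> R.

Lemma dual_mul (phi : (X -> R) -> R) h : dual_elt phi -> Cfun h -> (forall x, `|h x| <= 1) ->
  dual_elt (mulF h phi).
Proof.
move=> dphi ch h1; split.
  move=> a f g cf cg; rewrite /mulF.
  have -> : (fun x => h x * (a * f x + g x)) = (fun x => a * (h x * f x) + h x * g x).
    by apply/funext => x; rewrite mulrDr mulrCA.
  by apply: dphi.1; apply: C_mul.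
exists (dualnorm phi) => f cf; rewrite /mulF.
apply: le_trans (dn_bound hX dphi (C_mul ch cf)) _.
apply: ler_wpM2l; first exact: dn_ge0 dphi.
apply: supnorm_le; first exact: supnorm_ge0.
move=> x; rewrite normrM; apply: le_trans (supnorm_ge hX x cf).
by rewrite -[leRHS]mul1r ler_wpM2r.
Qed.

Lemma split_norm (phi : (X -> R) -> R) h : dual_elt phi -> Cfun h ->
  (forall x, 0 <= h x <= 1) ->
  dualnorm (mulF h phi) + dualnorm (mulF (fun x => 1 - h x) phi) <= dualnorm phi.
Proof.
move=> dphi ch h01.
have ch' : Cfun (fun x => 1 - h x) by apply: C_add; [exact: C_cst | exact: C_opp].
have d1 : dual_elt (mulF h phi).
  apply: dual_mul => // x; have := h01 x; rewrite ler_norml => /andP[a b]; apply/andP; split => //; lra.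
have d2 : dual_elt (mulF (fun x => 1 - h x) phi).
  apply: dual_mul => // x; have := h01 x; rewrite ler_norml => /andP[a b]; apply/andP; split; lra.
apply/ler_addgt0Pr => e e0.
have e2 : 0 < e / 2 by rewrite divr_gt0.
have [f1 [cf1 sf1 H1]] := dn_approx d1 e2.
have [f2 [cf2 sf2 H2]] := dn_approx d2 e2.
set s1 := sgn (mulF h phi f1); set s2 := sgn (mulF (fun x => 1 - h x) phi f2).
pose F := fun x => h x * (s1 * f1 x) + (1 - h x) * (s2 * f2 x).
have cF : Cfun F.
  apply: C_add; apply: C_mul => //; apply: C_mul => //; exact: C_cst.
have sF : supnorm F <= 1.
  apply: supnorm_le => // x; rewrite /F.
  apply: le_trans (ler_normD _ _) _.
  have := h01 x => /andP[a b].
  rewrite !normrM !sgn_norm !mul1r (ger0_norm a) (@ger0_norm _ (1 - h x)) ?subr_ge0 //.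
  have u1 := le_trans (supnorm_ge hX x cf1) sf1.
  have u2 := le_trans (supnorm_ge hX x cf2) sf2.
  have v1 : h x * `|f1 x| <= h x by rewrite -[leRHS]mulr1 ler_wpM2l.
  have v2 : (1 - h x) * `|f2 x| <= 1 - h x by rewrite -[leRHS]mulr1 ler_wpM2l // subr_ge0.
  lra.
have phiF : phi F = `|mulF h phi f1| + `|mulF (fun x => 1 - h x) phi f2|.
  rewrite -!sgnE /F (linD dphi.1).
  - rewrite /mulF -(linZ dphi.1 s1 (C_mul ch cf1)) -(linZ dphi.1 s2 (C_mul ch' cf2)).
    by congr (phi _ + phi _); apply/funext => x; rewrite mulrCA.
  - by apply: C_mul => //; apply: C_mul => //; exact: C_cst.
  - by apply: C_mul => //; apply: C_mul => //; exact: C_cst.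
have := dn_ge dphi cF sF; rewrite phiF ger0_norm ?addr_ge0 //.
lra.
Qed.

Lemma dn_add (p q : (X -> R) -> R) : dual_elt p -> dual_elt q ->
  dualnorm (fun f => p f + q f) <= dualnorm p + dualnorm q.
Proof.
move=> dp dq; apply: dn_le => f cf sf.
apply: le_trans (ler_normD _ _) _; apply: lerD; exact: dn_ge.
Qed.

Lemma dual_add (p q : (X -> R) -> R) : dual_elt p -> dual_elt q ->
  dual_elt (fun f => p f + q f).
Proof.
move=> dp dq; split.
  move=> a f g cf cg; rewrite dp.1 // dq.1 //; rewrite mulrDr; lra.
exists (dualnorm p + dualnorm q) => f cf.
apply: le_trans (ler_normD _ _) _; rewrite mulrDl; apply: lerD; exact: dn_bound.
Qed.
End Split.

Lemma small_zero (R : realType) (v c : R) : 0 <= c -> (forall e, 0 < e -> `|v| <= c * e) -> v = 0.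
Proof.
move=> c0 H; apply/eqP; rewrite -normr_le0; apply/ler_addgt0Pr => e e0.
have c1 : 0 < c + 1 by lra.
have := H (e / (c + 1)) (divr_gt0 e0 c1).
have : c * (e / (c + 1)) <= e.
  rewrite mulrA ler_pdivrMr // mulrDr mulr1 mulrC lerDl; exact: ltW.
lra.
Qed.

Lemma lin_cst (R : realType) (X : topologicalType) (phi : (X -> R) -> R) (c : R) :
  lin_on_C phi -> phi (fun _ => c) = c * phi (fun _ => 1).
Proof.
move=> lphi; rewrite -(linZ lphi c (C_cst 1)).
by congr phi; apply/funext => x; rewrite mulr1.
Qed.

Section Extremal.
Variable R : realType.
Variable X : topologicalType.
Hypothesis hX : compact [set: X].
Implicit Types f g h : X -> R.

Lemma extremal0 (y1 y2 : (X -> R) -> R) (s : X) : dual_elt y1 -> dual_elt y2 ->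
  (forall g, Cfun g -> y1 g + y2 g = g s) -> dualnorm y1 + dualnorm y2 <= 1 ->
  forall g, Cfun g -> g s = 0 -> y1 g = 0.
Proof.
move=> d1 d2 hsum hn g cg gs0.
apply: (@small_zero _ _ (dualnorm y1)); first exact: dn_ge0 d1.
move=> e e0.
pose ph := fun x => 1 - Num.min 1 (`|g x| / e).
have cph : Cfun ph.
  apply: C_add; first exact: C_cst.
  apply: C_opp; apply: C_min; first exact: C_cst.
  apply: C_mul; [exact: C_norm | exact: C_cst].
have ph01 : forall x, 0 <= ph x <= 1.
  move=> x; rewrite /ph; have m1 : Num.min 1 (`|g x| / e) <= 1 by rewrite ge_min lexx.
  have m0 : 0 <= Num.min 1 (`|g x| / e) by rewrite le_min ler01 /= divr_ge0 // ltW.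
  apply/andP; split; lra.
have ph1 : forall x, `|ph x| <= 1.
  by move=> x; have /andP[a b] := ph01 x; rewrite ger0_norm.
have cph' : Cfun (fun x => 1 - ph x) by apply: C_add; [exact: C_cst | exact: C_opp].
have ph1' : forall x, `|1 - ph x| <= 1.
  by move=> x; have /andP[a b] := ph01 x; rewrite ger0_norm ?subr_ge0 //; lra.
have phs : ph s = 1 by rewrite /ph gs0 normr0 mul0r (@min_r _ _ 1 0) ?ler01 // subr0.
have sp1 := split_norm hX d1 cph ph01.
have sp2 := split_norm hX d2 cph ph01.
have m1 := dual_mul hX d1 cph ph1.
have m2 := dual_mul hX d2 cph ph1.
have m1' := dual_mul hX d1 cph' ph1'.
have m2' := dual_mul hX d2 cph' ph1'.
have one : 1 <= dualnorm (mulF ph y1) + dualnorm (mulF ph y2).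
  have b0 : supnorm (fun _ : X => 1 : R) <= 1 by apply: supnorm_le => // x; rewrite normr1.
  have a1 := dn_ge m1 (C_cst 1) b0.
  have a2 := dn_ge m2 (C_cst 1) b0.
  have : mulF ph y1 (fun _ => 1) + mulF ph y2 (fun _ => 1) = 1.
    rewrite /mulF hsum; first by rewrite mulr1.
    by apply: C_mul => //; exact: C_cst.
  move=> E; apply: le_trans (lerD a1 a2); rewrite -{1}E; exact: le_trans (ler_norm _) (ler_normD _ _).
have z1 : dualnorm (mulF (fun x => 1 - ph x) y1) <= 0.
  have := dn_ge0 m2'; lra.
have split_g : y1 g = mulF ph y1 g + mulF (fun x => 1 - ph x) y1 g.
  rewrite /mulF -(linD d1.1); first by congr y1; apply/funext => x; lra.
    by apply: C_mul.
  by apply: C_mul.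
have r0 : `|mulF (fun x => 1 - ph x) y1 g| <= 0.
  apply: le_trans (dn_bound hX m1' cg) _.
  rewrite mulr_le0_ge0 //; exact: supnorm_ge0.
have r1 : `|mulF ph y1 g| <= dualnorm y1 * e.
  apply: le_trans (dn_bound hX d1 (C_mul cph cg)) _.
  apply: ler_wpM2l; first exact: dn_ge0 d1.
  apply: supnorm_le; first exact: ltW.
  move=> x; rewrite normrM /ph.
  have [ge|lt] := leP e `|g x|.
    have m : 1 <= `|g x| / e by rewrite ler_pdivlMr // mul1r.
    by rewrite (min_l m) subrr normr0 mul0r ltW.
  apply: le_trans (_ : 1 * `|g x| <= e); last by rewrite mul1r ltW.
  apply: ler_wpM2r => //; have /andP[a b] := ph01 x; by rewrite ger0_norm.
rewrite split_g; apply: le_trans (ler_normD _ _) _; lra.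
Qed.

Lemma extremal (y1 y2 : (X -> R) -> R) (s : X) : dual_elt y1 -> dual_elt y2 ->
  (forall g, Cfun g -> y1 g + y2 g = g s) -> dualnorm y1 + dualnorm y2 <= 1 ->
  forall g, Cfun g -> y1 g = y1 (fun _ => 1) * g s.
Proof.
move=> d1 d2 hsum hn g cg.
have := extremal0 d1 d2 hsum hn (g := fun x => g x - g s).
rewrite (linB d1.1 cg (C_cst (g s))) (lin_cst _ d1.1) subrr mulrC.
move=> H; apply/eqP; rewrite -subr_eq0; apply/eqP; apply: H => //.
by apply: C_add => //; apply: C_opp; exact: C_cst.
Qed.
End Extremal.

Section Char.
Variable R : realType.
Variable K : topologicalType.
Hypothesis hK : compact [set: K].
Implicit Types f g h : K -> R.

Lemma char_point (psi : (K -> R) -> R) : lin_on_C psi -> psi (fun _ => 1) = 1 ->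
  (forall f g, Cfun f -> Cfun g -> psi (fun x => f x * g x) = psi f * psi g) ->
  exists k, forall f, Cfun f -> psi f = f k.
Proof.
move=> lpsi p1 pm.
have pc : forall c, psi (fun _ => c) = c by move=> c; rewrite (lin_cst _ lpsi) p1 mulr1.
pose d h := fun x => h x - psi h.
have cd : forall h, Cfun h -> Cfun (d h).
  by move=> h ch; apply: C_add => //; apply: C_opp; exact: C_cst.
have pd : forall h, Cfun h -> psi (d h) = 0.
  by move=> h ch; rewrite /d (linB lpsi ch (C_cst (psi h))) pc subrr.
pose w h := fun x => d h x * d h x.
have cw : forall h, Cfun h -> Cfun (w h) by move=> h ch; apply: C_mul; exact: cd.
have pw : forall h, Cfun h -> psi (w h) = 0 by move=> h ch; rewrite pm ?pd ?mul0r //; exact: cd.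
have nonvanish : forall u, Cfun u -> psi u = 0 -> exists x, u x = 0.
  move=> u cu pu; apply/not_existsP => nz.
  have nz' : forall x, u x != 0 by move=> x; apply/eqP; exact: nz.
  have cv := C_inv nz' cu.
  have := pm _ _ cu cv; rewrite pu mul0r.
  have -> : (fun x => u x * (u x)^-1) = (fun _ => 1) by apply/funext => x; rewrite mulfV.
  by rewrite p1 => /eqP; rewrite oner_eq0.
pose E h := [set x | h x = psi h].
have sq0 : forall a b : R, a * a + b * b = 0 -> a = 0.
  move=> a b; have := sqr_ge0 a; have := sqr_ge0 b; rewrite !expr2 => ha hb hab.
  apply/eqP; rewrite -sqrf_eq0 expr2; apply/eqP; lra.
pose F := filter_from (@Cfun R K) E.
have FF : ProperFilter F.
  apply: filter_from_proper.
    apply: filter_from_filter; first by exists (fun _ => 0); exact: C_cst.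
    move=> i j ci cj; exists (fun x => w i x + w j x); first by apply: C_add; exact: cw.
    move=> x; rewrite /E /= linD ?pw ?addr0 //; try exact: cw.
    move=> h; split; apply/eqP; rewrite -subr_eq0; apply/eqP.
      exact: sq0 h.
    by apply: (sq0 _ (d i x)); rewrite addrC.
  move=> h ch; have [x hx] := nonvanish _ (cw h ch) (pw h ch).
  exists x; rewrite /E /=; apply/eqP; rewrite -subr_eq0; apply/eqP.
  apply: (sq0 _ (d h x)); move: hx; rewrite /w /d => ->; by rewrite addr0.
have [k [_ ck]] := hK FF (filterT).
exists k => h ch; apply/eqP; rewrite eq_sym; apply/negP => /negP hk.
have nb : nbhs k [set x | h x != psi h].
  apply: (ch k [set r | r != psi h]); apply: open_nbhs_nbhs; split; first exact: open_neq.
  by apply/eqP; move/eqP: hk.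
have FE : F (E h) by exists h.
have [x [Ex Nx]] := ck _ _ FE nb.
by move: Nx; rewrite /= Ex eqxx.
Qed.
End Char.

Lemma one_ball (R : realType) (X : topologicalType) : supnorm (fun _ : X => 1 : R) <= 1.
Proof. by apply: supnorm_le => // x; rewrite normr1. Qed.

Section Main.
Variable R : realType.
Variables K S : topologicalType.
Hypothesis hK : compact [set: K].
Hypothesis hS : compact [set: S].
Variable T : (K -> R) -> (S -> R).
Hypothesis hT : U_embedding T.

Let Tc : forall f, Cfun f -> Cfun (T f) := hT.1.1.
Let Tl := hT.1.2.1.
Let Tn := hT.1.2.2.
Let hU := hT.2.

Definition mu (s : S) : (K -> R) -> R := fun f => T f s.

Lemma mu_lin s : lin_on_C (mu s).
Proof. by move=> a f g cf cg; rewrite /mu (Tl a cf cg). Qed.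

Lemma mu_bound s f : Cfun f -> `|T f s| <= supnorm f.
Proof. by move=> cf; rewrite -Tn //; have := supnorm_ge hS s (Tc cf). Qed.

Lemma mu_dual s : dual_elt (mu s).
Proof. split; first exact: mu_lin. by exists 1 => f cf; rewrite mul1r; exact: mu_bound. Qed.

Lemma dirac_dual s : dual_elt (@dirac_fun R S s).
Proof.
split; first by move=> *.
by exists 1 => g cg; rewrite mul1r; have := supnorm_ge hS s cg.
Qed.

Lemma dn_dirac s : dualnorm (@dirac_fun R S s) = 1.
Proof.
apply/eqP; rewrite eq_le; apply/andP; split.
  by apply: dn_le => g cg sg; apply: le_trans sg; have := supnorm_ge hS s cg.
by have := dn_ge (dirac_dual s) (C_cst 1) (one_ball _ _); rewrite /dirac_fun normr1.
Qed.

Lemma dn_mu s : `|T (fun _ => 1) s| = 1 -> dualnorm (mu s) = 1.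
Proof.
move=> h1; apply/eqP; rewrite eq_le; apply/andP; split.
  by apply: dn_le => f cf sf; apply: le_trans sf; exact: mu_bound.
by have := dn_ge (mu_dual s) (C_cst 1) (one_ball _ _); rewrite /mu h1.
Qed.

Lemma step_h s : `|T (fun _ => 1) s| = 1 -> forall h, Cfun h -> (forall x, 0 <= h x <= 1) ->
  exists c, forall f, Cfun f -> mu s (fun x => h x * f x) = c * mu s f.
Proof.
move=> h1 h ch h01.
have dm := mu_dual s.
have ch' : Cfun (fun x => 1 - h x) by apply: C_add; [exact: C_cst | exact: C_opp].
have b1 : forall x, `|h x| <= 1.
  by move=> x; have /andP[a b] := h01 x; rewrite ger0_norm.
have b2 : forall x, `|1 - h x| <= 1.
  by move=> x; have /andP[a b] := h01 x; rewrite ger0_norm ?subr_ge0 //; lra.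
have dx1 := dual_mul hK dm ch b1.
have dx2 := dual_mul hK dm ch' b2.
have [y1 [d1 a1 n1 _]] := hU dx1.
have [y2 [d2 a2 n2 _]] := hU dx2.
pose y := fun g => y1 g + y2 g.
have dy : dual_elt y := dual_add hS d1 d2.
have ay : eq_on_C (adjoint T y) (mu s).
  move=> f cf; rewrite /adjoint /y.
  have := a1 f cf; have := a2 f cf; rewrite /adjoint => -> ->.
  rewrite /mulF -(linD (mu_lin s)); try by apply: C_mul.
  by congr (mu s); apply/funext => x; ring.
have hn : dualnorm y1 + dualnorm y2 <= 1.
  by rewrite n1 n2; apply: le_trans (split_norm hK dm ch h01) _; rewrite dn_mu.
have ny : dualnorm y = dualnorm (mu s).
  rewrite dn_mu //; apply/eqP; rewrite eq_le; apply/andP; split.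
    exact: le_trans (dn_add d1 d2) hn.
  have sT1 : supnorm (T (fun _ => 1)) <= 1 by rewrite Tn ?one_ball //; exact: C_cst.
  have := dn_ge dy (Tc (C_cst 1)) sT1.
  by have := ay _ (C_cst 1); rewrite /adjoint => ->; rewrite /mu h1.
have [y0 [_ _ _ uq]] := hU dm.
have e1 := uq y dy ay ny.
have e2 := uq (dirac_fun s) (dirac_dual s) (fun f cf => erefl) (etrans (dn_dirac s) (esym (dn_mu h1))).
have hsum : forall g, Cfun g -> y1 g + y2 g = g s.
  by move=> g cg; have := e1 g cg; have := e2 g cg; rewrite /y /dirac_fun => -> ->.
have ex := extremal hS d1 d2 hsum hn.
exists (y1 (fun _ => 1)) => f cf.
by have := a1 f cf; rewrite /adjoint /mulF => <-; rewrite (ex _ (Tc cf)).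
Qed.

End Main.

Section Core.
Variable R : realType.
Variables K S : topologicalType.
Hypothesis hK : compact [set: K].
Hypothesis hS : compact [set: S].
Variable T : (K -> R) -> (S -> R).
Hypothesis hT : U_embedding T.

Lemma core s : `|T (fun _ => 1) s| = 1 -> A0 T s.
Proof.
move=> h1.
have ml := mu_lin hT s.
set u := (mu T s) (fun _ => 1).
have hu : `|u| = 1 by [].
have u2 : u * u = 1.
  have := sqr_ge0 u; rewrite expr2 => g0.
  by rewrite -(ger0_norm g0) normrM hu mulr1.
pose psi := fun f => u * (mu T s) f.
pose P h := forall f, Cfun f -> (mu T s) (fun x => h x * f x) = psi h * (mu T s) f.
have P01 : forall h, Cfun h -> (forall x, 0 <= h x <= 1) -> P h.
  move=> h ch h01 f cf; have [c] := step_h hK hS hT h1 ch h01; move=> hc.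
  rewrite hc //; have := hc _ (C_cst 1).
  have -> : (fun x => h x * 1) = h by apply/funext => x; rewrite mulr1.
  by move=> mh; rewrite /psi mh mulrCA u2 mulr1.
have Plin : forall a b h1 h2, Cfun h1 -> Cfun h2 -> P h1 -> P h2 ->
    P (fun x => a * h1 x + b * h2 x).
  move=> a b g1 g2 c1 c2 p1 p2 f cf.
  have -> : (fun x => (a * g1 x + b * g2 x) * f x) =
            (fun x => a * (g1 x * f x) + b * (g2 x * f x)).
    by apply/funext => x; ring.
  have bl := linZ ml b (C_mul c2 cf).
  have cgf2 : Cfun (fun x => b * (g2 x * f x)) by apply: C_mul; [exact: C_cst | exact: C_mul].
  have L1 := ml a _ _ (C_mul c1 cf) cgf2; rewrite /= in L1. rewrite L1.
  rewrite p1 // bl p2 //.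
  have cbg : Cfun (fun x => b * g2 x) by apply: C_mul => //; exact: C_cst.
  have L2 := ml a _ _ c1 cbg; rewrite /= in L2.
  rewrite /psi L2 (linZ ml b c2); ring.
have P1 : P (fun _ => 1).
  move=> f cf; rewrite /psi u2 mul1r; congr (mu T s); apply/funext => x; exact: mul1r.
have Pall : forall h, Cfun h -> P h.
  move=> h ch.
  pose M := supnorm h + 1.
  have M0 : 0 < M by rewrite /M; have := supnorm_ge0 h; lra.
  pose h' := fun x => (2 * M)^-1 * h x + 2^-1.
  have ch' : Cfun h' by apply: C_lin => //; exact: C_cst.
  have h01 : forall x, 0 <= h' x <= 1.
    move=> x; rewrite /h'.
    have hx := supnorm_ge hK x ch.
    have : `|h x| < M by rewrite /M; lra.
    rewrite ltr_norml => /andP[a b].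
    have M2 : 0 < 2 * M by lra.
    have i2 : (2:R)^-1 * (2 * M) = M by rewrite mulrA mulVf ?mul1r // pnatr_eq0.
    have t1 : (2 * M)^-1 * h x <= 2^-1.
      rewrite mulrC ler_pdivrMr // i2; lra.
    have t2 : - 2^-1 <= (2 * M)^-1 * h x.
      rewrite mulrC ler_pdivlMr // mulNr i2; lra.
    have : (2:R)^-1 + 2^-1 = 1 by field.
    move=> half; apply/andP; split; lra.
  have E : h = (fun x => (2 * M) * h' x + (- M) * 1).
    have Mn : M != 0 by apply: lt0r_neq0.
    by apply/funext => x; rewrite /h'; field.
  rewrite E; apply: Plin => //; [exact: C_cst | exact: P01].
have pmul : forall f g, Cfun f -> Cfun g -> psi (fun x => f x * g x) = psi f * psi g.
  by move=> f g cf cg; rewrite /psi (Pall f cf g cg) /psi; ring.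
have plin : lin_on_C psi by move=> a f g cf cg; rewrite /psi (ml a f g cf cg); ring.
have p1 : psi (fun _ => 1) = 1 by [].
have [k hk] := char_point hK plin p1 pmul.
exists k.
have mf : forall f, Cfun f -> T f s = u * f k.
  move=> f cf; rewrite -hk // /psi mulrA u2 mul1r //.
have [u0|u0] := leP 0 u.
  left => f cf; rewrite /F_T /adjoint /dirac_fun mf //.
  by rewrite -(ger0_norm u0) hu mul1r.
right => f cf; rewrite /F_T /adjoint /dirac_fun mf //.
by rewrite -[u]opprK -(ltr0_norm u0) hu mulN1r.
Qed.
End Core.

Unset Implicit Arguments.
Theorem corollary6p21 (R : realType) (K S : topologicalType)
  (hK : compact [set: K]) (hKh : hausdorff_space K)
  (hS : compact [set: S]) (hSh : hausdorff_space S)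
  (T : (K -> R) -> (S -> R)) (hT : U_embedding T) :
  zero_set R (A0 T) /\ G_delta (A0 T).
Proof.
have Tc : forall f, Cfun f -> Cfun (T f) := hT.1.1.
pose g := fun s => 1 - `|T (fun _ => 1) s|.
have cg : Cfun g.
  apply: C_add; first exact: C_cst.
  apply: C_opp; apply: C_norm; apply: Tc; exact: C_cst.
have A0E : A0 T = [set s | g s = 0].
  apply/seteqP; split => s.
    move=> [k [Hk|Hk]]; have := Hk _ (C_cst 1); rewrite /F_T /adjoint /dirac_fun /g /= => ->;
      by rewrite ?normrN normr1 subrr.
  rewrite /g /= => h; apply: (core hK hS hT).
  by apply/eqP; rewrite eq_sym -subr_eq0; apply/eqP.
split; first by exists g.
exists (fun n => [set s | `|g s| < n.+1%:R^-1]); split.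
  move=> n; apply: (@open_comp _ _ (fun s => `|g s|) [set r | r < n.+1%:R^-1]).
    by move=> x _; exact: (C_norm cg).
  exact: open_lt.
rewrite A0E; apply/seteqP; split => s /=.
  by move=> gs n _; rewrite /= gs normr0 invr_gt0 ltr0n.
move=> Hs; apply/eqP; rewrite -normr_eq0; apply/negP => /negP nz.
have e0 : 0 < `|g s| by rewrite lt_def nz normr_ge0.
have [n hn] : exists n, n.+1%:R^-1 < `|g s|.
  exists (Num.truncn (`|g s|)^-1).
  by rewrite -ltf_pV2 ?(posrE,divr_gt0,invr_gt0)// invrK truncnS_gt.
have := Hs n I; rewrite /=; move: hn.
by move=> /lt_trans h /h; rewrite ltxx.
Qed.
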